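(* Let $G(q,x):=\sum_{j=-\infty}^{-1}q^{j(j+1)/2}x^j$. For $q\in[0,1]$ and $x\in\mathbb{C}$ with $|x|=a>2$, one has $|G(q,x)|\geq (a-2)/(a(a-1))$. In particular, for $|x|=3$, $|G(q,x)|\geq 1/6$.
   Context: Here $q^0$ is interpreted as $1$ (also for $q=0$), so the term $j=-1$ of $G$ equals $1/x$. *)

(* Defs.v *)
From Stdlib Require Import Reals.
From Coquelicot Require Import Coquelicot.
Open Scope R_scope.

(* Reindex j = -(n+1), n : nat;
   then j(j+1)/2 = n(n+1)/2 and x^j = 1/x^(n+1).  Stdlib's pow has q^0 = 1,
   including q = 0, matching the paper's convention. *)
Definition G_term (q : R) (x : C) (n : nat) : C :=
  Cmult (RtoC (q ^ ((n * (n + 1)) / 2)%nat)) (Cinv (pow_n x (n + 1))).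

Definition G_is (q : R) (x : C) (l : C) : Prop := is_series (G_term q x) l.

(* Main.v *)
Require Import Defs.
From Stdlib Require Import Reals Lra Lia.
From Coquelicot Require Import Coquelicot.
Open Scope R_scope.

Lemma Cmod_pow_n (x : C) (m : nat) : Cmod (pow_n x m) = Cmod x ^ m.
Proof.
  induction m as [|m IH]; simpl.
  - apply Cmod_1.
  - change (mult x (pow_n x m)) with (Cmult x (pow_n x m)).
    rewrite Cmod_mult, IH. reflexivity.
Qed.

Lemma term_bound (q a : R) (x : C) (n : nat) : 0 <= q <= 1 -> Cmod x = a -> 0 < a ->
  Cmod (G_term q x n) <= (/ a) ^ (n + 1).
Proof.
  intros Hq Hx Ha. unfold G_term.
  assert (Hp : pow_n x (n+1) <> RtoC 0).
  { intro H. assert (Cmod (pow_n x (n+1)) = 0) by (rewrite H; apply Cmod_0).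
    rewrite Cmod_pow_n, Hx in H0. apply (pow_nonzero a (n+1)) in H0; lra. }
  rewrite Cmod_mult, Cmod_inv by exact Hp. rewrite Cmod_pow_n, Hx, Cmod_R.
  rewrite <- pow_inv by lra.
  set (k := ((n * (n + 1)) / 2)%nat).
  assert (0 <= q ^ k <= 1).
  { split; [apply pow_le; lra | rewrite <- (pow1 k); apply pow_incr; lra]. }
  rewrite Rabs_pos_eq by lra.
  assert (0 <= (/a) ^ (n+1)) by (apply pow_le; left; apply Rinv_0_lt_compat; lra).
  nra.
Qed.

Lemma partial_bound (g : nat -> C) (r : R) : 0 <= r < 1 ->
  (forall k, Cmod (g k) <= r ^ (k + 2)) ->
  forall N, Cmod (sum_n g N) <= r ^ 2 * (1 - r ^ (N + 1)) / (1 - r).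
Proof.
  intros Hr Hg N. induction N as [|N IH].
  - rewrite sum_O. eapply Rle_trans; [apply Hg|]. simpl.
    right. field. lra.
  - rewrite sum_Sn. change (plus (sum_n g N) (g (S N))) with (Cplus (sum_n g N) (g (S N))).
    eapply Rle_trans; [apply Cmod_triangle|].
    eapply Rle_trans; [apply Rplus_le_compat; [apply IH | apply Hg]|].
    replace (S N + 2)%nat with (S (S (N + 1))) by lia.
    replace (S N + 1)%nat with (S (N + 1)) by lia.
    simpl. right. field. lra.
Qed.

Lemma main_bound (q a : R) (x : C) : 0 <= q <= 1 -> Cmod x = a -> 2 < a ->
  exists l : C, G_is q x l /\ (a - 2) / (a * (a - 1)) <= Cmod l.
Proof.
  intros Hq Hx Ha.
  set (f := G_term q x).
  assert (Hb : forall n, Cmod (f n) <= (/ a) ^ (n + 1)) by (intro; apply term_bound; lra).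
  assert (Hr : 0 < / a < 1).
  { split. apply Rinv_0_lt_compat; lra. rewrite <- Rinv_1. apply Rinv_lt_contravar; lra. }
  assert (Hex : ex_series f).
  { apply (ex_series_le f (fun n => (/a) ^ (n+1))).
    - intro n. apply Hb.
    - exists (/ a * / (1 - / a)).
      apply (is_series_ext (fun n => scal (/a) ((/a) ^ n))).
      + intro n. rewrite Nat.add_comm. simpl. reflexivity.
      + apply (@is_series_scal R_AbsRing R_NormedModule). apply is_series_geom. rewrite Rabs_pos_eq; lra. }
  destruct Hex as [l Hl].
  exists l. split; [exact Hl|].
  set (g := fun k => f (S k)).
  assert (Hg : is_series g (minus l (f 0%nat))).
  { apply is_series_incr_1. match goal with |- is_series _ ?L => replace L with l; [exact Hl|] end.
    change (l = Cplus (Cminus l (f 0%nat)) (f 0%nat)). assert (E : forall u v : C, u = Cplus (Cminus u v) v) by (intros; ring). apply E. }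
  assert (Hgb : forall k, Cmod (g k) <= (/a) ^ (k + 2)).
  { intro k. unfold g. eapply Rle_trans; [apply Hb|]. replace (S k + 1)%nat with (k+2)%nat by lia. lra. }
  assert (Ht : Cmod (minus l (f 0%nat)) <= (/a) ^ 2 / (1 - /a)).
  { assert (Hlim : is_lim_seq (fun N => norm (sum_n g N)) (norm (minus l (f 0%nat)))).
    { apply (filterlim_comp _ _ _ (sum_n g) norm eventually (locally (minus l (f 0%nat)))).
      exact Hg. apply filterlim_norm. }
    assert (Hle := is_lim_seq_le (fun N => norm (sum_n g N)) (fun _ => (/a) ^ 2 / (1 - /a)) _ _
       ltac:(intro N; change (Cmod (sum_n g N) <= (/a)^2/(1-/a)); eapply Rle_trans; [apply (partial_bound g (/a)); [lra|exact Hgb]|];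
             unfold Rdiv; apply Rmult_le_compat_r; [left; apply Rinv_0_lt_compat; lra|];
             assert (0 <= (/a) ^ (N+1)) by (apply pow_le; lra);
             assert (0 <= (/a) ^ 2) by (apply pow_le; lra); nra)
       Hlim (is_lim_seq_const _)).
    simpl in Hle. exact Hle. }
  assert (H0 : Cmod (f 0%nat) = / a).
  { unfold f, G_term. rewrite Cmod_mult, Cmod_inv.
    - rewrite Cmod_pow_n, Hx, Cmod_R. simpl. rewrite Rabs_R1. field. lra.
    - intro H. apply (f_equal Cmod) in H. rewrite Cmod_pow_n, Hx, Cmod_0 in H. simpl in H. lra. }
  assert (Htri : Cmod (f 0%nat) <= Cmod l + Cmod (minus l (f 0%nat))).
  { replace (f 0%nat) with (Cminus l (minus l (f 0%nat))) at 1.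
    - eapply Rle_trans; [apply Cmod_triangle|]. rewrite Cmod_opp. lra.
    - change (minus l (f 0%nat)) with (Cminus l (f 0%nat)). ring. }
  rewrite H0 in Htri.
  assert (E : (a - 2) / (a * (a - 1)) = / a - (/a) ^ 2 / (1 - /a)) by (field; lra).
  rewrite E. lra.
Qed.

Theorem lemma1 :
  (forall (q a : R) (x : C), 0 <= q <= 1 -> Cmod x = a -> 2 < a ->
     exists l : C, G_is q x l /\ (a - 2) / (a * (a - 1)) <= Cmod l) /\
  (forall (q : R) (x : C), 0 <= q <= 1 -> Cmod x = 3 ->
     exists l : C, G_is q x l /\ 1 / 6 <= Cmod l).
Proof.
  split.
  - exact main_bound.
  - intros q x Hq Hx. destruct (main_bound q 3 x Hq Hx ltac:(lra)) as [l [Hl Hb]].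
    exists l. split; [exact Hl|]. replace (1/6) with ((3-2)/(3*(3-1))) by field. exact Hb.
Qed.
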